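(* For every prime $p$, $\mathscr{U}(p)\supset\mathscr{A}(p)$.
   Context: Let $p$ be a prime. For an integer $r\ge 2$ let $x_1,\ldots,x_r$ be independent indeterminates over $\mathbb{F}_p$ and $f(x)=(x-x_1)\cdots(x-x_r)$. For integers $e\ge0$, $0\le d\le p$ write $f(x)^e=\sum_{i\ge0}c_ix^i$ ($c_i=0$ for $i<0$) and let $M_d(f(x)^e)$ be the $d\times d$ matrix with $(i,j)$ entry $c_{ip+j-d-1}$. Put $\delta(x_1,\ldots,x_r)=\prod_{1\le i<j\le r}(x_i-x_j)$. $\mathscr{A}(p)$ is the set of integer triples $(r,e,d)$ with $r\ge2$, $e\ge1$, $1\le d\le p$, such that $\det M_d(f(x)^e)=\varepsilon\,\delta(x_1,\ldots,x_r)^g$ for some $\varepsilon\in\mathbb{F}_p^{\times}$ and positive integer $g$. For integer triples put $g=g(r,e,d)=\left\{red-\frac{d(d+1)}{2}(p-1)\right\}\big/\frac{r(r-1)}{2}\in\mathbb{Q}$. $\mathscr{U}(p)$ is the set of integer triples $(r,e,d)$ with $r\ge2$, $e\ge1$, $1\le d\le p$, $d(p-1)\le re\le r(p-1)$, $g>0$, and $g\in2\mathbb{Z}$ if $p\ne2$, $g\in\mathbb{Z}$ if $p=2$. *)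

(* Defs.v *)
From HB Require Import structures.
From mathcomp Require Import all_boot all_order all_algebra.
From mathcomp Require Import mpoly.
Set Implicit Arguments. Unset Strict Implicit. Unset Printing Implicit Defensive.
Import Order.TTheory GRing.Theory Num.Theory.
Local Open Scope ring_scope.

Definition fpoly (p r : nat) : {poly {mpoly 'F_p[r]}} :=
  \prod_(i < r) ('X - ('X_i)%:P).

(* M_d(f^e): d x d matrix, (i,j) entry (1-based) c_{ip+j-d-1}, c_k = 0 for k<0.
   With 0-based i j : 'I_d, index = (i+1)p + (j+1) - d - 1 = (i+1)p + j - d. *)
Definition Mmat (p r e d : nat) : 'M[{mpoly 'F_p[r]}]_d :=
  \matrix_(i < d, j < d)
    (if (d <= i.+1 * p + j)%N then (fpoly p r ^+ e)`_(i.+1 * p + j - d)%N else 0).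

Definition delta (p r : nat) : {mpoly 'F_p[r]} :=
  \prod_(i < r) \prod_(j < r | (i < j)%N) ('X_i - 'X_j).

Definition inA (p r e d : nat) : Prop :=
  [/\ (2 <= r)%N, (1 <= e)%N, (1 <= d <= p)%N &
   exists (eps : 'F_p) (g : nat), [/\ eps != 0, (0 < g)%N &
     \det (Mmat p r e d) = eps%:MP * delta p r ^+ g]].

Definition gval (p r e d : nat) : rat :=
  ((r * e * d)%:R - (d * d.+1)%:R / 2 * (p.-1)%:R) / ((r * r.-1)%:R / 2).

Definition inU (p r e d : nat) : Prop :=
  [/\ [&& (2 <= r)%N, (1 <= e)%N & (1 <= d <= p)%N],
      (d * p.-1 <= r * e <= r * p.-1)%N, 0 < gval p r e d &
      if p != 2%N then exists k : int, gval p r e d = (2 * k)%:~R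
      else exists k : int, gval p r e d = k%:~R].

(* Main.v *)
Require Import Defs.
From mathcomp Require Import all_boot all_order all_algebra.
From mathcomp Require Import mpoly.
From mathcomp Require Import all_fingroup.
From mathcomp Require Import zify ring lra.
Set Implicit Arguments. Unset Strict Implicit. Unset Printing Implicit Defensive.
Import Order.TTheory GRing.Theory Num.Theory.
Local Open Scope ring_scope.

Section HomSec.
Variables (R : comRingType) (n : nat).
Implicit Types (P Q : {poly {mpoly R[n]}}).

Definition Hom P (k : nat) :=
  (size P <= k.+1)%N /\ forall i, P`_i \is (k - i)%N.-homog.

Lemma HomM P Q a b : Hom P a -> Hom Q b -> Hom (P * Q) (a + b)%N.
Proof.
move=> [sP hP] [sQ hQ]; split.
  apply: leq_trans (size_polyMleq P Q) _; rewrite -subn1.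
  lia.
move=> i; rewrite coefM; apply: rpred_sum => j _.
have [ja|ja] := leqP j a; last first.
  have -> : P`_j = 0 by apply: nth_default; exact: leq_trans sP ja.
  by rewrite mul0r rpred0.
have [ib|ib] := leqP (i - j) b; last first.
  have -> : Q`_(i - j) = 0 by apply: nth_default; exact: leq_trans sQ ib.
  by rewrite mulr0 rpred0.
have E : (a + b - i = a - j + (b - (i - j)))%N.
  have := ltn_ord j; lia.
rewrite E; exact: dhomogM.
Qed.

Lemma Hom1 : Hom 1 0.
Proof.
split; first by rewrite size_poly1.
by move=> [|i]; rewrite coef1 /= ?dhomog1 ?rpred0.
Qed.

Lemma HomXsub (c : {mpoly R[n]}) : c \is 1%N.-homog -> Hom ('X - c%:P) 1.
Proof.
move=> hc; split; first by rewrite size_XsubC.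
move=> [|[|i]]; rewrite coefB coefX coefC /=.
- by rewrite sub0r rpredN.
- by rewrite subr0 dhomog1.
- by rewrite subr0 rpred0.
Qed.

Lemma HomX P a e : Hom P a -> Hom (P ^+ e) (a * e)%N.
Proof.
move=> hP; elim: e => [|e IH]; first by rewrite expr0 muln0; exact: Hom1.
by rewrite exprS mulnS; apply: HomM.
Qed.

End HomSec.

Lemma homogXU (R : comRingType) n (i : 'I_n) : ('X_i : {mpoly R[n]}) \is 1%N.-homog.
Proof. by rewrite dhomogX; apply/eqP; exact: mdeg1. Qed.

Lemma Hom_f p r : Hom (fpoly p r) r.
Proof.
rewrite /fpoly.
have E : (\sum_(i < r) 1 = r)%N by rewrite sum1_card card_ord.
rewrite -[X in Hom _ X]E.
elim/big_rec2: _ => [|i k P _ hP]; first exact: Hom1.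
by apply: HomM => //; apply: HomXsub; apply: homogXU.
Qed.

Lemma Hom_fe p r e : Hom (fpoly p r ^+ e) (r * e)%N.
Proof. exact: HomX (Hom_f p r). Qed.

Section Mat.
Variables (p r e d : nat).
Local Notation A := (Mmat p r e d).
Local Notation w i j := (r * e + d - (i.+1 * p + j))%N.

Lemma entry_homog (i j : 'I_d) : A i j \is (w i j).-homog.
Proof.
rewrite mxE; case: ifP => h; last exact: rpred0.
have [_ H] := Hom_fe p r e.
have E : (r * e - (i.+1 * p + j - d) = w i j)%N by lia.
by rewrite -E; apply: H.
Qed.

Lemma entry_nz (i j : 'I_d) : A i j != 0 -> (i.+1 * p + j <= r * e + d)%N.
Proof.
rewrite mxE; case: ifP => h; last by rewrite eqxx.
have [S _] := Hom_fe p r e.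
move=> nz.
have : (i.+1 * p + j - d < size (fpoly p r ^+ e))%N.
  by rewrite ltnNge; apply: contra nz => H; rewrite nth_default.
move=> H1; have := leq_trans H1 S; lia.
Qed.

Lemma term_homog (s : 'S_d) : \prod_(i < d) A i (s i) \is (\sum_(i < d) w i (s i)).-homog.
Proof.
elim/big_rec2: _ => [|i k P _ hP]; first exact: dhomog1.
by apply: dhomogM => //; apply: entry_homog.
Qed.

Lemma term_sum (s : 'S_d) : \prod_(i < d) A i (s i) != 0 ->
  (\sum_(i < d) w i (s i) + \sum_(i < d) (i.+1 * p + i) = d * (r * e + d))%N.
Proof.
move/prodf_neq0 => H.
have E1 : (\sum_(i < d) (i.+1 * p + i) = \sum_(i < d) (i.+1 * p + s i))%N.
  rewrite !big_split /=; congr (_ + _)%N.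
  exact: (reindex_inj (@perm_inj _ s)).
rewrite E1 -big_split /=.
rewrite (eq_bigr (fun _ => r * e + d)%N); last first.
  move=> i _; have := entry_nz (H i isT); lia.
by rewrite big_const_ord iter_addn_0 mulnC.
Qed.

Lemma det_homog : \det A != 0 -> exists D : nat,
  \det A \is D.-homog /\ (D + \sum_(i < d) (i.+1 * p + i) = d * (r * e + d))%N.
Proof.
move=> nz.
have [s0 nz0] : exists s0 : 'S_d, \prod_(i < d) A i (s0 i) != 0.
  apply/existsP; apply: contraR nz; rewrite negb_exists => /forallP H.
  rewrite /determinant; apply/eqP; apply: big1 => s _.
  by have := H s; rewrite negbK => /eqP ->; rewrite mulr0.
exists (\sum_(i < d) w i (s0 i))%N; split; last exact: term_sum.
rewrite /determinant; apply: rpred_sum => s _.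
have [z|nzs] := eqVneq (\prod_(i < d) A i (s i)) 0.
  by rewrite z mulr0 rpred0.
have E : (\sum_(i < d) w i (s0 i) = \sum_(i < d) w i (s i))%N.
  by apply/eqP; rewrite -(eqn_add2r (\sum_(i < d) (i.+1 * p + i))) !term_sum.
have h1 : (-1 : {mpoly 'F_p[r]}) \is 0%N.-homog by rewrite rpredN dhomog1.
have := dhomogM (dhomogMn s h1) (term_homog s).
by rewrite mul0n add0n E.
Qed.

End Mat.

Definition Npairs r := (\sum_(i < r) \sum_(j < r | i < j) 1)%N.

Lemma Npairs_rec r : Npairs r.+1 = (Npairs r + r)%N.
Proof.
rewrite /Npairs big_ord_recr /=.
rewrite [X in (_ + X)%N]big_pred0; last first.
  by move=> j; rewrite ltnNge -ltnS ltn_ord.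
rewrite addn0.
rewrite (eq_bigr (fun i : 'I_r => \sum_(j < r | i < j) 1 + 1)%N); last first.
  move=> i _; rewrite big_mkcond big_ord_recr /= -big_mkcond /= ltn_ord.
  by [].
by rewrite big_split /= sum1_card card_ord.
Qed.

Lemma Npairs2 r : (2 * Npairs r = r * r.-1)%N.
Proof.
elim: r => [|r IH]; first by rewrite /Npairs big_ord0.
rewrite Npairs_rec mulnDr IH /=; case: r {IH} => [|r] //=; lia.
Qed.

Lemma delta_homog p r : delta p r \is (Npairs r).-homog.
Proof.
rewrite /delta /Npairs.
elim/big_rec2: _ => [|i k P _ hP]; first exact: dhomog1.
apply: dhomogM => //.
elim/big_rec2: _ => [|j k' P' _ hP']; first exact: dhomog1.
by apply: dhomogM => //; rewrite rpredB ?homogXU.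
Qed.

Lemma X_neq (p r : nat) (i j : 'I_r) : prime p -> i != j ->
  ('X_i : {mpoly 'F_p[r]}) != 'X_j.
Proof.
move=> pp nij; apply/eqP => /(congr1 (fun q : {mpoly 'F_p[r]} => q@_U_(i))).
rewrite !mcoeffXU eqxx eq_sym (negbTE nij) => /eqP.
by rewrite oner_eq0.
Qed.

Lemma X_neq0 (p r : nat) (i : 'I_r) : prime p -> ('X_i : {mpoly 'F_p[r]}) != 0.
Proof.
move=> pp; apply/eqP => /(congr1 (fun q : {mpoly 'F_p[r]} => q@_U_(i))).
by rewrite mcoeffXU eqxx mcoeff0 => /eqP; rewrite oner_eq0.
Qed.

Lemma prod_pairs_neq0 (p r : nat) (v : 'I_r -> {mpoly 'F_p[r]}) :
  (forall i j : 'I_r, (i < j)%N -> v i != v j) ->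
  \prod_(i < r) \prod_(j < r | (i < j)%N) (v i - v j) != 0.
Proof.
move=> H; apply/prodf_neq0 => i _; apply/prodf_neq0 => j ij.
by rewrite subr_eq0 H.
Qed.

Lemma delta_neq0 p r : prime p -> delta p r != 0.
Proof.
move=> pp; apply: prod_pairs_neq0 => i j ij; apply: X_neq => //.
by rewrite neq_ltn ij.
Qed.

Lemma map_Mmat p r e d (phi : {rmorphism {mpoly 'F_p[r]} -> {mpoly 'F_p[r]}})
  (i j : 'I_d) :
  phi (Mmat p r e d i j) = if (d <= i.+1 * p + j)%N
     then ((map_poly phi (fpoly p r)) ^+ e)`_(i.+1 * p + j - d) else 0.
Proof.
rewrite mxE; case: ifP => _; last exact: rmorph0.
by rewrite -rmorphXn coef_map.
Qed.

Lemma det_row0 (R : comRingType) n (M : 'M[R]_n) (i0 : 'I_n) :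
  (forall j, M i0 j = 0) -> \det M = 0.
Proof.
move=> H; rewrite (expand_det_row _ i0) big1 // => j _.
by rewrite H mul0r.
Qed.

Lemma msym_delta p r (i0 i1 : 'I_r) : val i0 = 0%N -> val i1 = 1%N ->
  msym (tperm i0 i1) (delta p r) = - delta p r.
Proof.
move=> h0 h1; set s := tperm i0 i1.
have msX i : msym s ('X_i : {mpoly 'F_p[r]}) = 'X_(s i) by rewrite /msym mmapX mmap1U.
have sfix (j : 'I_r) : (1 < j)%N -> s j = j.
  move=> hj; rewrite tpermD //.
    by apply: contraTneq hj => <-; rewrite h0.
  by apply: contraTneq hj => <-; rewrite h1.
pose T (k : 'I_r) := \prod_(j < r | (1 < j)%N) ('X_k - 'X_j : {mpoly 'F_p[r]}).
have Tsym k : msym s (T k) = T (s k).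
  rewrite rmorph_prod; apply: eq_bigr => j hj; by rewrite rmorphB /= !msX (sfix j hj).
have i10 : i1 != i0 by apply/eqP => /(congr1 val); rewrite h0 h1.
pose B := \prod_(i < r | (1 < i)%N) \prod_(j < r | (i < j)%N) ('X_i - 'X_j : {mpoly 'F_p[r]}).
have spl : delta p r = ('X_i0 - 'X_i1) * T i0 * T i1 * B.
  rewrite /delta (bigD1 i0) //= [X in _ * X](bigD1 i1) //=.
  rewrite [X in _ * (_ * X)](eq_bigl (fun i : 'I_r => (1 < i)%N)); last first.
    move=> i /=; rewrite -!(inj_eq val_inj) h0 h1.
    by case: i => [[|[|k]] ?].
  rewrite [X in X * _](bigD1 i1) /=; last by rewrite h0 h1.
  rewrite [X in (_ * X) * _](eq_bigl (fun j : 'I_r => (1 < j)%N)); last first.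
    move=> j /=; rewrite -!(inj_eq val_inj) h0 h1.
    by case: j => [[|[|k]] ?].
  rewrite [X in _ * (X * _)](eq_bigl (fun j : 'I_r => (1 < j)%N)); last first.
    by move=> j /=; rewrite h1.
  by rewrite /T /B !mulrA.
have Bsym : msym s B = B.
  rewrite rmorph_prod; apply: eq_bigr => i hi.
  rewrite rmorph_prod; apply: eq_bigr => j hj.
  rewrite rmorphB /= !msX (sfix i hi) (sfix j (ltn_trans hi hj)) //.
rewrite spl !rmorphM /= Bsym !Tsym rmorphB /= !msX /s tpermL tpermR.
ring.
Qed.

Lemma map_prod_XsubC (R S : comRingType) (phi : {rmorphism R -> S}) n
  (P : pred 'I_n) (a : 'I_n -> R) :
  map_poly phi (\prod_(i < n | P i) ('X - (a i)%:P)) =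
  \prod_(i < n | P i) ('X - (phi (a i))%:P).
Proof.
elim/big_rec2: _ => [|i y1 y2 _ <-]; first by rewrite rmorph1.
by rewrite rmorphM /= map_polyXsubC.
Qed.

Lemma prod_XsubC_split0 (R : comRingType) n (i0 : 'I_n) (a : 'I_n -> R) :
  a i0 = 0 ->
  \prod_(i < n) ('X - (a i)%:P) = 'X * \prod_(i < n | i != i0) ('X - (a i)%:P).
Proof. by move=> h; rewrite (bigD1 i0) //= h subr0. Qed.

Lemma e_lt_p p r e d (eps : 'F_p) g : prime p -> (0 < r)%N -> (0 < d)%N ->
  eps != 0 -> \det (Mmat p r e d) = eps%:MP * delta p r ^+ g -> (e < p)%N.
Proof.
move=> pp r0 d0 neps E; rewrite ltnNge; apply/negP => pe.
pose i0 : 'I_r := Ordinal r0.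
pose lq := [tuple (if i == i0 then 0 else 'X_i : {mpoly 'F_p[r]}) | i < r].
pose phi : {rmorphism {mpoly 'F_p[r]} -> {mpoly 'F_p[r]}} := comp_mpoly lq.
have phiX i : phi 'X_i = if i == i0 then 0 else 'X_i.
  by rewrite /phi /= comp_mpolyXU -tnth_nth tnth_mktuple.
have phiC c : phi c%:MP = c%:MP by rewrite /phi /= comp_mpolyC.
clearbody phi; clear lq.
have mapf : map_poly phi (fpoly p r) =
    'X * \prod_(i < r | i != i0) ('X - ('X_i)%:P).
  rewrite /fpoly map_prod_XsubC.
  transitivity ('X * \prod_(i < r | i != i0) ('X - (phi 'X_i)%:P)).
    by apply: prod_XsubC_split0; rewrite phiX eqxx.
  apply: congr1; apply: eq_bigr => i ne.
  by rewrite phiX (negbTE ne).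
pose j0 : 'I_d := Ordinal d0.
have : phi (\det (Mmat p r e d)) = 0.
  rewrite -det_map_mx; apply: (@det_row0 _ _ _ j0) => j.
  rewrite mxE map_Mmat; case: ifP => // _.
  rewrite mapf exprMn coefXnM ifT //.
  have := ltn_ord j; have := prime_gt0 pp; rewrite /= mul1n; lia.
rewrite E rmorphM rmorphXn phiC => /eqP.
rewrite mulf_eq0 mpolyC_eq0 (negbTE neps) /= expf_eq0 => /andP [_].
apply/negP; rewrite /delta rmorph_prod.
under eq_bigr do rewrite rmorph_prod.
under eq_bigr do under eq_bigr do rewrite rmorphB !phiX.
apply: prod_pairs_neq0 => i j ij.
have -> : (j == i0) = false.
  by apply/negbTE; apply: contraTneq ij => ->; rewrite /i0 /= ?ltn0.
case: (i == i0) => /=; first by rewrite eq_sym X_neq0.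
by apply: X_neq => //; rewrite neq_ltn ij.
Qed.

Lemma row_last p r e d : (0 < d)%N -> (0 < p)%N ->
  \det (Mmat p r e d) != 0 -> (d * p.-1 <= r * e)%N.
Proof.
move=> d0 p0; rewrite leqNgt; apply: contra => lt.
have hd : (d.-1 < d)%N by rewrite prednK.
apply/eqP; apply: (@det_row0 _ _ _ (Ordinal hd)) => j.
rewrite mxE; case: ifP => // h.
apply: nth_default.
have [S _] := Hom_fe p r e.
apply: leq_trans S _.
have E1 : (d * p.-1 = d * p - d)%N by rewrite -subn1 mulnBr muln1.
rewrite /= prednK //.
lia.
Qed.

Lemma prod_perm (R : comRingType) n (s : 'S_n) (a : 'I_n -> R) :
  \prod_(i < n) ('X - (a (s i))%:P) = \prod_(i < n) ('X - (a i)%:P).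
Proof. by rewrite [RHS](reindex_inj (@perm_inj _ s)). Qed.

Lemma parity p r e d (eps : 'F_p) g : prime p -> p != 2%N -> (2 <= r)%N ->
  eps != 0 -> \det (Mmat p r e d) = eps%:MP * delta p r ^+ g -> ~~ odd g.
Proof.
move=> pp p2 r2 neps E; apply/negP => og.
have r0 : (0 < r)%N by apply: ltn_trans r2.
pose i0 : 'I_r := Ordinal r0.
pose i1 : 'I_r := Ordinal r2.
pose s := tperm i0 i1.
have msX i : msym s ('X_i : {mpoly 'F_p[r]}) = 'X_(s i) by rewrite /msym mmapX mmap1U.
have msC c : msym s (c%:MP : {mpoly 'F_p[r]}) = c%:MP by rewrite /msym mmapC.
have md : msym s (delta p r) = - delta p r by apply: msym_delta.
pose phi : {rmorphism {mpoly 'F_p[r]} -> {mpoly 'F_p[r]}} := msym s.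
have phiX i : phi 'X_i = 'X_(s i) by exact: msX.
have phiC c : phi c%:MP = c%:MP by exact: msC.
have phid : phi (delta p r) = - delta p r by exact: md.
clearbody phi.
have symf : map_poly phi (fpoly p r) = fpoly p r.
  rewrite /fpoly map_prod_XsubC.
  transitivity (\prod_(i < r) ('X - ('X_(s i) : {mpoly 'F_p[r]})%:P)).
    by apply: eq_bigr => i _; rewrite phiX.
  exact: prod_perm.
have symdet : phi (\det (Mmat p r e d)) = \det (Mmat p r e d).
  rewrite -det_map_mx; congr (\det _); apply/matrixP => i j.
  by rewrite mxE map_Mmat symf mxE.
move: symdet; rewrite E rmorphM rmorphXn phiC phid.
rewrite exprNn -signr_odd og expr1 mulN1r mulrN => /eqP.
set x := _ * _.
have nx : x != 0.
  by rewrite mulf_neq0 ?mpolyC_eq0 // expf_neq0 // delta_neq0.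
rewrite eq_sym -subr_eq0 opprK -mulr2n -mulr_natl mulf_eq0 (negbTE nx) orbF.
rewrite -(rmorph_nat (@mpolyC r 'F_p)) mpolyC_eq0 -(dvdn_pcharf (pchar_Fp pp)).
move=> /dvdn_leq => /(_ isT) => h.
have := prime_gt1 pp; move/eqP: p2 => p2; lia.
Qed.

Lemma sumC2 p d : (2 * \sum_(i < d) (i.+1 * p + i) = d * d.+1 * p + d * d.-1)%N.
Proof.
elim: d => [|d IH]; first by rewrite big_ord0.
rewrite big_ord_recr /= mulnDr IH.
case: d {IH} => [|d] /=; nia.
Qed.

Lemma aux2 d : (d * d.+1 = d * d.-1 + 2 * d)%N.
Proof. case: d => [|d] //=; nia. Qed.

Lemma aux3 d x : (d * (x + d) = x * d + (d * d.-1 + d))%N.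
Proof. case: d => [|d] //=; nia. Qed.

Theorem lemma4 (p : nat) : prime p ->
  forall r e d : nat, inA p r e d -> inU p r e d.
Proof.
move=> pp r e d [r2 e1 /andP[d1 dp] [eps [g [neps g0 E]]]].
have nzdet : \det (Mmat p r e d) != 0.
  by rewrite E mulf_neq0 ?mpolyC_eq0 // expf_neq0 // delta_neq0.
have [D [hD hDC]] := det_homog nzdet.
have hR : eps%:MP * delta p r ^+ g \is (Npairs r * g)%N.-homog.
  by rewrite mul_mpolyC rpredZ // dhomogMn // delta_homog.
have DN : D = (Npairs r * g)%N by apply: (dhomog_uniq nzdet hD); rewrite E.
have C2 := sumC2 p d.
have N2 := Npairs2 r.
have etp := e_lt_p pp (ltnW r2) d1 neps E.
have rl := row_last d1 (prime_gt0 pp) nzdet.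
have p1 := prime_gt0 pp.
have K : (r * r.-1 * g + d * d.+1 * p.-1 = 2 * (r * e * d))%N.
  have H1 : (r * r.-1 * g = 2 * D)%N by rewrite DN mulnA -N2.
  have F1 : (d * d.+1 * p = d * d.+1 * p.-1 + d * d.+1)%N.
    by rewrite -{1}(prednK p1) mulnS addnC.
  have F2 := aux2 d.
  have F3 := aux3 d (r * e).
  rewrite H1; move: hDC C2 F1 F2 F3.
  set C := (\sum_(i < d) _)%N.
  generalize (d * d.+1 * p.-1)%N (d * d.+1 * p)%N (d * d.+1)%N (d * d.-1)%N (r * e * d)%N (d * (r * e + d))%N (r * e)%N.
  intros; lia.
have Hg : Defs.gval p r e d = g%:R.
  have -> : Defs.gval p r e d = ((r * e * d)%N%:R - (d * d.+1)%N%:R / 2 * (p.-1)%:R)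
      / ((r * r.-1)%N%:R / 2) by [].
  have Kq := congr1 (fun n => n%:R : rat) K; rewrite /= !natrD !natrM in Kq.
  rewrite !natrM.
  have -> : (r%:R * e%:R * d%:R : rat) =
      (r%:R * (r.-1)%:R * g%:R + d%:R * (d.+1)%:R * (p.-1)%:R) / 2.
    by rewrite Kq; field.
  have r0 : (r%:R * (r.-1)%:R : rat) != 0.
    have h1 : (0 < r)%N := ltnW r2.
    have h2 : (0 < r.-1)%N by rewrite -subn1 subn_gt0.
    by rewrite mulf_neq0 // pnatr_eq0 -lt0n.
  by field; move: r0; rewrite mulf_eq0 negb_or andbC.
split.
- by rewrite r2 e1 d1 dp.
- rewrite rl /=; apply: leq_mul => //; by rewrite -ltnS prednK.
- by rewrite Hg ltr0n.
- case: ifP => [p2|_]; last by exists g%:Z; rewrite Hg.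
  have ev := parity pp p2 r2 neps E.
  exists (g./2)%:Z; rewrite Hg.
  have -> : (2 * (g./2)%:Z = g%:Z)%R.
    rewrite -[in RHS](odd_double_half g) (negbTE ev) add0n -mul2n.
    by rewrite PoszM.
  by [].
Qed.
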